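(* Let $X$ be a uniform space equipped with a uniformly continuous and expansive action of a group $\Gamma$, and let $f \colon X \to X$ be a uniformly continuous and $\Gamma$-equivariant map. Suppose that $Y$ is a subset of $X$ such that the restriction of $f$ to $Y$ is a uniform embedding. Then there exists an entourage $V$ of $X$ with the following property: if $Z$ is a $\Gamma$-invariant subset of $X$ such that $Z \subset V[Y]$, then the restriction of $f$ to $Z$ is injective.
   Context: For $V \subset X \times X$ and $A \subset X$, $V[A] = \{x \in X : (x,a) \in V \text{ for some } a \in A\}$. An action of $\Gamma$ on a uniform space $X$ is uniformly continuous if each map $x \mapsto \gamma x$ is uniformly continuous; it is expansive if there is an entourage $W_0$ of $X$ such that for any two distinct $x,y \in X$ there is $\gamma \in \Gamma$ with $(\gamma x,\gamma y) \notin W_0$. A map $f$ restricted to $Y$ is a uniform embedding if it is injective on $Y$ and induces a uniform isomorphism from $Y$ onto $f(Y)$ (with the induced uniform structures). *)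

(* Defs.v *)
From HB Require Import structures.
From mathcomp Require Import all_boot all_order.
From mathcomp Require Import all_classical all_reals all_analysis.
Set Implicit Arguments. Unset Strict Implicit. Unset Printing Implicit Defensive.
Local Open Scope classical_set_scope.

Definition is_group (G : Type) (mul : G -> G -> G) (one : G) (inv : G -> G) :=
  [/\ forall a b c, mul a (mul b c) = mul (mul a b) c,
      forall a, mul one a = a
    & forall a, mul (inv a) a = one].

Definition is_action (G X : Type) (mul : G -> G -> G) (one : G)
  (act : G -> X -> X) :=
  (forall x, act one x = x) /\
  (forall g h x, act (mul g h) x = act g (act h x)).

Definition ent_img (X : Type) (V : set (X * X)) (A : set X) : set X :=
  [set x | exists2 a, A a & V (x, a)].

Definition expansive_action (G : Type) (X : uniformType) (act : G -> X -> X) :=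
  exists2 W0 : set (X * X), entourage W0 &
    forall x y : X, x <> y -> exists g : G, ~ W0 (act g x, act g y).

(* f restricted to Y is a uniform embedding: injective on Y and a uniform
   isomorphism Y -> f(Y) for the induced uniform structures. *)
Definition uniform_embedding_on (X : uniformType) (f : X -> X) (Y : set X) :=
  [/\ {in Y &, injective f},
      (forall F : set (X * X), entourage F ->
         exists2 E : set (X * X), entourage E &
           forall y1 y2, Y y1 -> Y y2 -> E (y1, y2) -> F (f y1, f y2))
    & (forall E : set (X * X), entourage E ->
         exists2 F : set (X * X), entourage F &
           forall y1 y2, Y y1 -> Y y2 -> F (f y1, f y2) -> E (y1, y2))].

(* Main.v *)
Require Import Defs.
From HB Require Import structures.
From mathcomp Require Import all_boot all_order.
From mathcomp Require Import all_classical all_reals all_analysis.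
Local Open Scope classical_set_scope.
Lemma t1 (X : uniformType) (f : X -> X) (F1 : set (X*X)) : unif_continuous f -> entourage F1 ->
 entourage [set xy : X * X | F1 (f xy.1, f xy.2)].
Proof. move=> hf eF1. exact: hf. Qed.
Lemma t2 (X : uniformType) (E2 P : set (X*X)) : entourage E2 -> entourage P ->
 entourage ((E2 `&` E2^-1) `&` (P `&` P^-1))%relation.
Proof. by move=> ? ?; apply: filterI; apply: entourage_invI. Qed.

Theorem theorem4p1 (G : Type) (mul : G -> G -> G) (one : G) (inv : G -> G)
  (X : uniformType) (act : G -> X -> X) (f : X -> X) (Y : set X) :
  is_group mul one inv ->
  is_action mul one act ->
  (forall g : G, unif_continuous (act g)) ->
  expansive_action act ->
  unif_continuous f ->
  (forall (g : G) (x : X), f (act g x) = act g (f x)) ->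
  uniform_embedding_on f Y ->
  exists2 V : set (X * X), entourage V &
    forall Z : set X,
      (forall (g : G) (z : X), Z z -> Z (act g z)) ->
      Z `<=` ent_img V Y ->
      {in Z &, injective f}.
Proof.
move=> _ _ _ [W0 eW0 hW0] hf hfeq [_ _ hinv].
have [E1 eE1 sE1] := entourage_split_ex eW0.
have [E2 eE2 sE2] := entourage_split_ex eE1.
have sp1 : forall x y z, E1 (x, z) -> E1 (z, y) -> W0 (x, y).
  by move=> x y z a b; apply: (sE1 (x, y)); exists z.
have sp2 : forall x y z, E2 (x, z) -> E2 (z, y) -> E1 (x, y).
  by move=> x y z a b; apply: (sE2 (x, y)); exists z.
have E21 : forall x y, E2 (x, y) -> E1 (x, y).
  by move=> x y a; apply: (sp2 x y y) => //; exact: entourage_refl.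
have [F eF hF] := hinv E2 eE2.
have [F1 eF1 sF1] := entourage_split_ex eF.
have eP : entourage [set xy : X * X | F1 (f xy.1, f xy.2)] by exact: (t1 _ _ _ hf eF1).
exists ((E2 `&` E2^-1) `&` ([set xy : X * X | F1 (f xy.1, f xy.2)] `&` [set xy : X * X | F1 (f xy.1, f xy.2)]^-1))%relation.
  exact: t2.
move=> Z hZ ZV z1 z2 Zz1 Zz2 feq.
apply: contrapT => neq.
have [g ng] := hW0 _ _ neq; apply: ng.
have [y1 Yy1 [[V1 _] [_ V1']]] := ZV _ (hZ g _ (set_mem Zz1)).
have [y2 Yy2 [[_ V2] [V2' _]]] := ZV _ (hZ g _ (set_mem Zz2)).
have fe : f (act g z1) = f (act g z2) by rewrite !hfeq feq.
have Fy : F (f y1, f y2).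
  apply: (sF1 (f y1, f y2)); exists (f (act g z1)); first exact: V1'.
  by rewrite fe; exact: V2'.
have Ey := hF _ _ Yy1 Yy2 Fy.
apply: (sp1 _ _ y1); first exact: E21.
exact: (sp2 _ _ y2 Ey V2).
Qed.
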